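(* For every $\varepsilon>0$ and all $N\geqslant1$, $$\sum_{\substack{m,n\geqslant1\\ mn\leqslant N}}(m,n^\infty)^{\frac12}\big((mn)^\sharp\big)^{\frac14}\ll_\varepsilon N^{1+\varepsilon}.$$
   Context: $(m,n^\infty)$ is the largest divisor of $m$ all of whose prime factors divide $n$. For a positive integer $a$, $a^\sharp=\prod_{p^\nu\| a,\ \nu\geqslant2}p^\nu$ is its squarefull part. *)

(* Defs.v *)
From mathcomp Require Import all_boot.
From Stdlib Require Import Reals.

(* (m, n^oo): the largest divisor of m all of whose prime factors divide n,
   i.e. the \pi(n)-part of m. *)
Definition coprime_part (m n : nat) : nat := m`_(\pi(n)).

(* a^#: squarefull part of a, the product of p^nu over p^nu || a with nu >= 2. *)
Definition sqfull (a : nat) : nat := a`_[pred p | 1 < logn p a].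

Open Scope R_scope.

Definition summand (m n : nat) : R :=
  Rpower (INR (coprime_part m n)) (1/2) * Rpower (INR (sqfull (m * n))) (1/4).

Definition S (N : nat) : R :=
  sum_f_R0 (fun m => sum_f_R0 (fun n =>
     if (Nat.leb 1 m && Nat.leb 1 n && Nat.leb (m * n) N)%bool
     then summand m n else 0) N) N.

(* Main.v *)
From HB Require Import structures.
Require Import Defs.
From Stdlib Require Import Reals Lra Lia.
From mathcomp Require Import all_boot.
Open Scope R_scope.

Lemma Rplus_assoc' : associative Rplus. Proof. move=> *; by rewrite Rplus_assoc. Qed.
Lemma Rmult_assoc' : associative Rmult. Proof. move=> *; by rewrite Rmult_assoc. Qed.
HB.instance Definition _ := Monoid.isComLaw.Build R 0 Rplus Rplus_assoc' Rplus_comm Rplus_0_l.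
HB.instance Definition _ := Monoid.isComLaw.Build R 1 Rmult Rmult_assoc' Rmult_comm Rmult_1_l.
HB.instance Definition _ := Monoid.isMulLaw.Build R 0 Rmult Rmult_0_l Rmult_0_r.
HB.instance Definition _ := Monoid.isAddLaw.Build R Rmult Rplus Rmult_plus_distr_r Rmult_plus_distr_l.
Lemma notin_coprime a d p : (0 < a)%N -> (0 < d)%N -> coprime a d ->
  p \in primes a -> p \in primes d -> False.
Proof.
move=> a0 d0; rewrite coprime_has_primes // => /hasPn H pa pd.
by move: (H p pd); rewrite /= pa.
Qed.

Lemma part_pi_coprime a b d : (0 < a)%N -> (0 < b)%N -> (0 < d)%N -> coprime a d ->
  a`_\pi((b * d)%N) = a`_\pi(b).
Proof.
move=> a0 b0 d0 cad; apply: eq_in_partn => p pa.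
rewrite !inE /= in pa *.
rewrite primesM //; case pd: (p \in primes d); last by rewrite orbF.
by case: (@notin_coprime a d p a0 d0 cad pa pd).
Qed.

Lemma cp_mul a b c d : (0 < a)%N -> (0 < b)%N -> (0 < c)%N -> (0 < d)%N ->
  coprime (a * b) (c * d) ->
  coprime_part (a * c) (b * d) = (coprime_part a b * coprime_part c d)%N.
Proof.
move=> a0 b0 c0 d0; rewrite coprimeMl !coprimeMr => /andP[/andP[_ cad] /andP[cbc _]].
rewrite /coprime_part partnM // part_pi_coprime // [(b * d)%N]mulnC part_pi_coprime //.
by rewrite coprime_sym.
Qed.

Lemma sf_mul x y : (0 < x)%N -> (0 < y)%N -> coprime x y ->
  sqfull (x * y) = (sqfull x * sqfull y)%N.
Proof.
move=> x0 y0 cxy; rewrite /sqfull partnM //; congr (_ * _)%N.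
  apply: eq_in_partn => p px; rewrite !inE /= in px *.
  rewrite lognM //; suff -> : logn p y = 0%N by rewrite addn0.
  apply/eqP; rewrite -leqn0 leqNgt logn_gt0; apply/negP => py.
  exact: (@notin_coprime x y p x0 y0 cxy px py).
apply: eq_in_partn => p py; rewrite !inE /= in py *.
rewrite lognM //; suff -> : logn p x = 0%N by rewrite add0n.
apply/eqP; rewrite -leqn0 leqNgt logn_gt0; apply/negP => px.
exact: (@notin_coprime x y p x0 y0 cxy px py).
Qed.

Lemma INR_pos n : (0 < n)%N -> 0 < INR n.
Proof. by move=> /ltP h; apply: lt_0_INR. Qed.

Definition Fw (eps : R) (m n : nat) : R :=
  summand m n * Rpower (INR (m * n)%N) (-(1+eps)).

Lemma Rpower_INR_mul x y z : (0 < x)%N -> (0 < y)%N ->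
  Rpower (INR (x * y)%N) z = Rpower (INR x) z * Rpower (INR y) z.
Proof.
move=> x0 y0; rewrite -multE mult_INR Rpower_mult_distr //; exact: INR_pos.
Qed.

Lemma summandE m n : summand m n =
  Rpower (INR (coprime_part m n)) (1/2) * Rpower (INR (sqfull (m * n)%N)) (1/4).
Proof. by []. Qed.

Lemma Fw_mul eps a b c d : (0 < a)%N -> (0 < b)%N -> (0 < c)%N -> (0 < d)%N ->
  coprime (a * b) (c * d) ->
  Fw eps (a * c) (b * d) = Fw eps a b * Fw eps c d.
Proof.
move=> a0 b0 c0 d0 cop.
have E : ((a * c) * (b * d) = (a * b) * (c * d))%N by rewrite mulnACA.
rewrite /Fw !summandE E.
rewrite cp_mul // sf_mul ?muln_gt0 ?a0 ?b0 ?c0 ?d0 //.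
rewrite !Rpower_INR_mul ?muln_gt0 ?a0 ?b0 ?c0 ?d0 ?part_gt0 //.
ring.
Qed.

Lemma Rpower1 z : Rpower 1 z = 1.
Proof. by rewrite /Rpower ln_1 Rmult_0_r exp_0. Qed.

Lemma Fw11 eps : Fw eps 1 1 = 1.
Proof.
rewrite /Fw summandE /coprime_part /sqfull !muln1 !partn1.
have E : INR 1 = 1 by [].
rewrite E !Rpower1; ring.
Qed.

Lemma coprime_prod (I : eqType) (s : seq I) (g : I -> nat) x :
  (forall i, i \in s -> coprime x (g i)) -> coprime x (\prod_(i <- s) g i)%N.
Proof.
elim: s => [|y s IH] H; first by rewrite big_nil coprimen1.
rewrite big_cons coprimeMr H ?mem_head //= IH // => i si.
by apply: H; rewrite in_cons si orbT.
Qed.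

Lemma Fw_prod eps (I : eqType) (s : seq I) (q : I -> nat) (a b : I -> nat) :
  uniq s -> (forall i, i \in s -> prime (q i)) ->
  {in s &, injective q} ->
  Fw eps (\prod_(i <- s) q i ^ a i)%N (\prod_(i <- s) q i ^ b i)%N
  = \big[Rmult/1]_(i <- s) Fw eps (q i ^ a i)%N (q i ^ b i)%N.
Proof.
elim: s => [|x s IH] /=; first by rewrite !big_nil Fw11.
move=> /andP[xs us] pr inj.
have prx : prime (q x) by apply: pr; rewrite mem_head.
have pos : forall k, (0 < q x ^ k)%N by move=> k; rewrite expn_gt0 prime_gt0.
have prs : forall i, i \in s -> prime (q i) by move=> i si; apply: pr; rewrite in_cons si orbT.
have poss : forall (e : I -> nat), (0 < \prod_(i <- s) q i ^ e i)%N.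
  by move=> e; rewrite big_seq; apply: prodn_cond_gt0 => i si; rewrite expn_gt0 prime_gt0 ?prs.
rewrite !big_cons Fw_mul ?pos ?poss //; last first.
  rewrite coprimeMl !coprimeMr.
  have H : forall k (e : I -> nat), coprime (q x ^ k) (\prod_(i <- s) q i ^ e i)%N.
    move=> k e; apply: coprime_prod => i si; apply: coprimeXl; apply: coprimeXr.
    rewrite prime_coprime // dvdn_prime2 //; last exact: prs.
    apply/eqP => E; move: xs; rewrite (inj x i) ?mem_head ?si //.
    by rewrite in_cons si orbT.
  by rewrite !H.
rewrite IH // => i j si sj; apply: inj; rewrite in_cons ?si ?sj orbT //=.
Qed.

Lemma sumR_ge0 (I : Type) (r : seq I) (P : pred I) (F : I -> R) :
  (forall i, P i -> 0 <= F i) -> 0 <= \big[Rplus/0]_(i <- r | P i) F i.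
Proof.
move=> H; apply: (big_ind (fun x => 0 <= x)) => //; first exact: Rle_refl.
by move=> x y hx hy; lra.
Qed.

Lemma sumR_le (I : Type) (r : seq I) (P : pred I) (F G : I -> R) :
  (forall i, P i -> F i <= G i) ->
  \big[Rplus/0]_(i <- r | P i) F i <= \big[Rplus/0]_(i <- r | P i) G i.
Proof.
move=> H; apply: (big_ind2 (fun x y => x <= y)) => //; first exact: Rle_refl.
by move=> x1 x2 y1 y2 h1 h2; lra.
Qed.

Lemma prodR_le (I : Type) (r : seq I) (P : pred I) (F G : I -> R) :
  (forall i, P i -> 0 <= F i <= G i) ->
  0 <= \big[Rmult/1]_(i <- r | P i) F i <= \big[Rmult/1]_(i <- r | P i) G i.
Proof.
move=> H; apply: (big_ind2 (fun x y => 0 <= x <= y)) => //; first lra.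
move=> x1 x2 y1 y2 h1 h2; split; first by apply: Rmult_le_pos; lra.
by apply: Rmult_le_compat; lra.
Qed.

Lemma sum_sub_le (T : finType) (A : {pred T}) (G : T -> R) :
  (forall x, 0 <= G x) ->
  \big[Rplus/0]_(x in A) G x <= \big[Rplus/0]_x G x.
Proof.
move=> G0. rewrite big_mkcond /=; apply: sumR_le => x _.
case: (x \in A); [exact: Rle_refl | exact: G0].
Qed.

Lemma Fw_ge0 eps m n : 0 <= Fw eps m n.
Proof.
rewrite /Fw summandE; apply: Rmult_le_pos; last by left; apply: exp_pos.
by apply: Rmult_le_pos; left; apply: exp_pos.
Qed.

Definition Pl (N : nat) : seq nat := [seq p <- iota 0 N.+1 | prime p].

Lemma logn_lt p m : prime p -> (0 < m)%N -> (logn p m < m.+1)%N.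
Proof.
move=> pp m0; rewrite ltnS.
have h1 : (p ^ logn p m <= m)%N by apply: dvdn_leq => //; exact: pfactor_dvdnn.
apply: leq_trans h1; apply: ltnW; apply: ltn_expl; exact: prime_gt1.
Qed.

Lemma prod_Pl N m : (0 < m)%N -> (m <= N)%N ->
  (\prod_(p <- Pl N) p ^ logn p m)%N = m.
Proof.
move=> m0 mN; rewrite big_filter.
rewrite -{2}(partnT m0) (widen_partn _ mN).
rewrite big_mkcond [RHS]big_mkcond; apply: eq_bigr => p _ /=.
case pp: (prime p) => //.
by rewrite lognE pp.
Qed.

Lemma expand eps N :
  \big[Rplus/0]_(x : 'I_N.+1 * 'I_N.+1 | (0 < x.1)%N && (0 < x.2)%N) Fw eps x.1 x.2
  <= \big[Rmult/1]_(l < size (Pl N))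
       \big[Rplus/0]_(ij : 'I_N.+1 * 'I_N.+1)
          Fw eps (nth 0%N (Pl N) l ^ ij.1)%N (nth 0%N (Pl N) l ^ ij.2)%N.
Proof.
set k := size (Pl N).
set q := fun l : 'I_k => nth 0%N (Pl N) l.
have uP : uniq (Pl N) by apply: filter_uniq; apply: iota_uniq.
have prq : forall l : 'I_k, prime (q l).
  move=> l; have : q l \in Pl N by apply: mem_nth.
  by rewrite mem_filter => /andP[].
have injq : injective q.
  move=> l1 l2 /eqP; rewrite /q nth_uniq // => /eqP; exact: val_inj.
rewrite bigA_distr_bigA /=.
pose G (phi : {ffun 'I_k -> 'I_N.+1 * 'I_N.+1}) :=
  Fw eps (\prod_(l : 'I_k) q l ^ (phi l).1)%N (\prod_(l : 'I_k) q l ^ (phi l).2)%N.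
have GE : forall phi : {ffun 'I_k -> 'I_N.+1 * 'I_N.+1}, \big[Rmult/1]_(l : 'I_k) Fw eps (q l ^ (phi l).1)%N (q l ^ (phi l).2)%N = G phi.
  move=> phi; rewrite /G Fw_prod //.
  - exact: index_enum_uniq.
  - by move=> l1 l2 _ _; apply: injq.
rewrite (eq_bigr G); last by move=> phi _; exact: GE phi.
pose psi (x : 'I_N.+1 * 'I_N.+1) : {ffun 'I_k -> 'I_N.+1 * 'I_N.+1} :=
  [ffun l => (inord (logn (q l) x.1), inord (logn (q l) x.2))].
have prodE : forall m : 'I_N.+1, (0 < m)%N ->
    (\prod_(l : 'I_k) q l ^ (inord (logn (q l) m) : 'I_N.+1))%N = m.
  move=> m m0.
  have mN : (m <= N)%N by rewrite -ltnS.
  rewrite -[RHS](@prod_Pl N m m0 mN) (big_nth 0%N) big_mkord.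
  apply: eq_bigr => l _; rewrite inordK //.
  apply: leq_trans (logn_lt _ _ (prq l) m0) _; by rewrite ltnS.
pose A : {pred 'I_N.+1 * 'I_N.+1} := [pred x : 'I_N.+1 * 'I_N.+1 | (0 < x.1)%N && (0 < x.2)%N].
have psiE : forall x, x \in A -> G (psi x) = Fw eps x.1 x.2.
  move=> [m n] /andP[/= m0 n0]; rewrite /G.
  under eq_bigr do rewrite ffunE /=.
  under [X in Fw eps _ X]eq_bigr do rewrite ffunE /=.
  by rewrite prodE // prodE.
have injpsi : {in A &, injective psi}.
  move=> [m n] [m' n'] /andP[/= m0 n0] /andP[/= m0' n0'] E.
  have E1 : forall l, (psi (m, n) l).1 = (psi (m', n') l).1 by move=> l; rewrite E.
  have E2 : forall l, (psi (m, n) l).2 = (psi (m', n') l).2 by move=> l; rewrite E.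
  have Hm : m = m' :> nat.
    rewrite -(prodE m m0) -(prodE m' m0'); apply: eq_bigr => l _.
    by have := E1 l; rewrite !ffunE /= => ->.
  have Hn : n = n' :> nat.
    rewrite -(prodE n n0) -(prodE n' n0'); apply: eq_bigr => l _.
    by have := E2 l; rewrite !ffunE /= => ->.
  by rewrite (val_inj Hm) (val_inj Hn).
have -> : \big[Rplus/0]_(x : 'I_N.+1 * 'I_N.+1 | (0 < x.1)%N && (0 < x.2)%N) Fw eps x.1 x.2
        = \big[Rplus/0]_(x in A) G (psi x).
  by apply: eq_bigr => x xA; rewrite psiE.
rewrite -big_imset //.
apply: sum_sub_le => phi; exact: Fw_ge0.
Qed.

Lemma part_one n (pi : nat_pred) : (forall p, p \in primes n -> p \notin pi) -> n`_pi = 1%N.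
Proof.
move=> H; rewrite (@eq_in_partn pi pred0); last first.
  by move=> p pn; rewrite /= (negbTE (H p _)) //.
by rewrite /partn big_pred0.
Qed.

Lemma ln_le x y : 0 < x -> x <= y -> ln x <= ln y.
Proof. move=> x0 [xy|->]; [left; exact: ln_increasing | exact: Rle_refl]. Qed.

Lemma exp_le x y : x <= y -> exp x <= exp y.
Proof. move=> [xy|->]; [left; exact: exp_increasing | exact: Rle_refl]. Qed.

Lemma ln_INR_le a b : (0 < a)%N -> (a <= b)%N -> ln (INR a) <= ln (INR b).
Proof. move=> a0 /leP ab; apply: ln_le; [exact: INR_pos | exact: le_INR]. Qed.
Lemma key_ineq (L L2 eps I J lc ls : R) : 0 < L2 -> L2 <= L -> 0 < eps -> 0 <= I -> 0 <= J ->
  (J = 0 /\ lc = 0 \/ 1 <= J /\ lc <= I * L) ->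
  (I + J = 1 /\ ls = 0 \/ 2 <= I + J /\ ls <= (I + J) * L) ->
  1/2 * lc + 1/4 * ls + (- (1 + eps)) * ((I + J) * L)
   <= L2 + (- (1 + eps)) * L + I * (- / 4 * L2) + J * (- / 4 * L2).
Proof.
intros h1 h2 h3 hI hJ [[-> ->]|[h4 h5]] [[h6 ->]|[h6 h7]].
- assert (I = 1) by lra; subst. nra.
- assert (0 <= eps * (I - 1) * L) by (apply Rmult_le_pos; [apply Rmult_le_pos|]; lra).
  destruct (Rle_lt_dec (I + 0) 4).
  + nra.
  + nra.
- assert (I = 0) by lra; subst. nra.
- assert (0 <= eps * (I + J - 1) * L) by (apply Rmult_le_pos; [apply Rmult_le_pos|]; lra).
  destruct (Rle_lt_dec (I + J) 4).
  + nra.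
  + nra.
Qed.

Lemma INR_expn q k : INR (q ^ k)%N = INR q ^ k.
Proof.
elim: k => [|k IH]; first by rewrite expn0.
by rewrite expnS -multE mult_INR IH.
Qed.

Definition rr : R := exp (- / 4 * ln 2).

Lemma rr_pow i : rr ^ i = exp (INR i * (- / 4 * ln 2)).
Proof.
rewrite /rr -[LHS]exp_ln; last by apply: pow_lt; apply: exp_pos.
by rewrite ln_pow ?ln_exp //; apply: exp_pos.
Qed.

Lemma pointwise eps q i j : 0 < eps -> prime q ->
  Fw eps (q ^ i)%N (q ^ j)%N <=
  (if (i == 0%N) && (j == 0%N) then 1 else 0)
    + 2 * Rpower (INR q) (-(1+eps)) * rr ^ i * rr ^ j.
Proof.
move=> e0 pq.
have T0 : 0 < Rpower (INR q) (-(1+eps)) by apply: exp_pos.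
have rr0 : forall k, 0 < rr ^ k by move=> k; apply: pow_lt; apply: exp_pos.
case ij0: ((i == 0%N) && (j == 0%N)).
  move/andP: ij0 => [/eqP-> /eqP->]; rewrite !expn0 Fw11.
  have := rr0 0%N; simpl; nra.
rewrite Rplus_0_l.
have q2 : (2 <= q)%N by exact: prime_gt1.
have q0 : (0 < q)%N by exact: prime_gt0.
have t2 : 2 <= INR q by have := le_INR 2 q (elimT leP q2); simpl; lra.
have L2pos : 0 < ln 2 by have := ln_lt_2; lra.
have L2L : ln 2 <= ln (INR q) by apply: ln_le; lra.
have lnpow : forall k, ln (INR (q ^ k)%N) = INR k * ln (INR q).
  by move=> k; rewrite INR_expn ln_pow //; lra.
have cpos : (0 < coprime_part (q ^ i) (q ^ j))%N by apply: part_gt0.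
have spos : (0 < sqfull (q ^ i * q ^ j))%N by apply: part_gt0.
have Hc : (INR j = 0 /\ ln (INR (coprime_part (q ^ i) (q ^ j))) = 0) \/
          (1 <= INR j /\ ln (INR (coprime_part (q ^ i) (q ^ j))) <= INR i * ln (INR q)).
  case: (posnP j) => [j0 | jpos].
    left; rewrite j0 expn0 /coprime_part part_one //; split; first by [].
    by rewrite /= ln_1.
  right; split; first by have := le_INR 1 j (elimT leP jpos); simpl.
  rewrite -lnpow; apply: ln_INR_le => //.
  by apply: dvdn_leq; [rewrite expn_gt0 q0 | exact: dvdn_part].
have Hs : (INR i + INR j = 1 /\ ln (INR (sqfull (q ^ i * q ^ j))) = 0) \/
          (2 <= INR i + INR j /\ ln (INR (sqfull (q ^ i * q ^ j))) <= (INR i + INR j) * ln (INR q)).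
  rewrite -expnD -plus_INR plusE.
  case: (leqP (i + j) 1) => [le1 | gt1].
    have e1 : (i + j = 1)%N.
      apply/eqP; rewrite eqn_leq le1 /=; move: ij0 le1.
      by case: (i) => [|i'] //=; case: (j).
    left; rewrite e1 expn1; split; first by [].
    rewrite /sqfull part_one ?ln_1 // => p; rewrite primes_prime // inE => /eqP->.
    by rewrite inE /= logn_prime // eqxx.
  right; split; first by have := le_INR 2 (i + j) (elimT leP gt1); simpl.
  rewrite -lnpow; apply: ln_INR_le; first exact: part_gt0.
  by apply: dvdn_leq; [rewrite expn_gt0 q0 | exact: dvdn_part].
rewrite /Fw summandE /Rpower -expnD lnpow plus_INR.
have E2 : 2 * exp (- (1 + eps) * ln (INR q)) = exp (ln 2 + - (1 + eps) * ln (INR q)).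
  by rewrite exp_plus exp_ln //; lra.
rewrite E2 !rr_pow -!exp_plus; apply: exp_le.
rewrite -expnD in Hs.
apply: key_ineq => //; try exact: pos_INR.
Qed.

Lemma rr_bound : 0 < rr <= 6/7.
Proof.
have r0 : 0 < rr by apply: exp_pos.
split => //.
have h4 : rr ^ 4 = / 2.
  rewrite rr_pow.
  replace (INR 4 * (- / 4 * ln 2)) with (- ln 2) by (simpl; field).
  by rewrite exp_Ropp exp_ln //; lra.
apply: Rnot_lt_le => h.
have : (6/7)^4 <= rr ^ 4 by apply: pow_incr; lra.
rewrite h4; simpl; lra.
Qed.

Lemma geom_sum n : \big[Rplus/0]_(i < n) rr ^ i <= 7.
Proof.
have [r0 r1] := rr_bound.
have E : (\big[Rplus/0]_(i < n) rr ^ i) * (1 - rr) = 1 - rr ^ n.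
  elim: n => [|n IH]; first by rewrite big_ord0 /=; ring.
  rewrite big_ord_recr /= Rmult_plus_distr_r IH /=; ring.
have p0 : 0 <= rr ^ n by apply: pow_le; lra.
have S0 : 0 <= \big[Rplus/0]_(i < n) rr ^ i.
  apply: sumR_ge0 => i _; apply: pow_le; lra.
nra.
Qed.

Lemma local eps q N : 0 < eps -> prime q ->
  \big[Rplus/0]_(ij : 'I_N.+1 * 'I_N.+1) Fw eps (q ^ ij.1)%N (q ^ ij.2)%N
   <= 1 + 98 * Rpower (INR q) (-(1+eps)).
Proof.
move=> e0 pq.
set T := Rpower (INR q) (-(1+eps)).
have T0 : 0 < T by apply: exp_pos.
apply: Rle_trans.
  apply: sumR_le => ij _; exact: (pointwise eps q ij.1 ij.2 e0 pq).
rewrite big_split /=.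
have -> : \big[Rplus/0]_(ij : 'I_N.+1 * 'I_N.+1)
     (if ((ij.1 : nat) == 0%N) && ((ij.2 : nat) == 0%N) then 1 else 0) = 1.
  rewrite -big_mkcond /=.
  rewrite (eq_bigl (fun ij => ij == (ord0, ord0))); first by rewrite big_pred1_eq.
  by move=> [a b] /=; rewrite xpair_eqE.
rewrite -(pair_bigA _ (fun (i j : 'I_N.+1) => 2 * T * rr ^ i * rr ^ j)) /=.
have -> : \big[Rplus/0]_(i < N.+1) \big[Rplus/0]_(j < N.+1) (2 * T * rr ^ i * rr ^ j)
   = 2 * T * (\big[Rplus/0]_(i < N.+1) rr ^ i) * (\big[Rplus/0]_(j < N.+1) rr ^ j).
  rewrite Rmult_assoc big_distrlr big_distrr /=; apply: eq_bigr => i _.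
  rewrite big_distrr /=; apply: eq_bigr => j _; ring.
have g := geom_sum N.+1.
have g0 : 0 <= \big[Rplus/0]_(i < N.+1) rr ^ i.
  by apply: sumR_ge0 => i _; apply: pow_le; have := rr_bound; lra.
have : (\big[Rplus/0]_(i < N.+1) rr ^ i) * (\big[Rplus/0]_(i < N.+1) rr ^ i) <= 49.
  by nra.
nra.
Qed.

Lemma step_ineq eps x : 0 < eps -> 2 <= x ->
  eps * Rpower x (-(1+eps)) <= Rpower (x - 1) (- eps) - Rpower x (- eps).
Proof.
move=> e0 x2; rewrite /Rpower.
set a := ln (x - 1); set b := ln x.
have ea : exp a = x - 1 by rewrite /a exp_ln //; lra.
have eb : exp b = x by rewrite /b exp_ln //; lra.
have hab : exp (a - b) = (x - 1) / x.
  by rewrite /Rminus exp_plus exp_Ropp ea eb.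
have h1 := exp_ineq1_le (a - b).
rewrite hab in h1.
have hba : b - a >= / x.
  have : (x - 1) / x = 1 - / x by field; lra.
  lra.
have h2 := exp_ineq1_le (eps * (b - a)).
have E1 : exp (- eps * a) = exp (- eps * b) * exp (eps * (b - a)).
  by rewrite -exp_plus; f_equal; ring.
have E2 : exp (- (1 + eps) * b) = exp (- eps * b) * / x.
  have : exp (- (1 + eps) * b) = exp (- eps * b) * exp (- b) by rewrite -exp_plus; f_equal; ring.
  by rewrite exp_Ropp eb.
rewrite E1 E2.
have p0 : 0 < exp (- eps * b) by apply: exp_pos.
have : eps * (b - a) >= eps * / x by apply: Rmult_ge_compat_l; lra.
nra.
Qed.

Lemma zeta_tail eps N : 0 < eps ->
  \big[Rplus/0]_(n < N.+2 | (2 <= n)%N) Rpower (INR n) (-(1+eps))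
   <= / eps * (1 - Rpower (INR N.+1) (- eps)).
Proof.
move=> e0; elim: N => [|N IH].
  rewrite big_mkcond /= !big_ord_recr big_ord0 /=.
  rewrite Rpower1; lra.
have x2 : 2 <= INR N.+2.
  have := le_INR 2 N.+2 (elimT leP (isT : (2 <= N.+2)%N)); simpl; lra.
have := step_ineq eps (INR N.+2) e0 x2.
have -> : INR N.+2 - 1 = INR N.+1 by rewrite (S_INR N.+1); ring.
have ie : 0 < / eps by apply: Rinv_0_lt_compat.
move=> h.
rewrite big_mkcond big_ord_recr -big_mkcond.
have -> : (if (1 < (@ord_max N.+2 : nat))%N then Rpower (INR (@ord_max N.+2)) (- (1 + eps)) else 0)
   = Rpower (INR N.+2) (- (1 + eps)) by [].
apply: Rle_trans (Rplus_le_compat_r _ _ _ IH) _.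
have : / eps * (eps * Rpower (INR N.+2) (- (1 + eps))) <=
       / eps * (Rpower (INR N.+1) (- eps) - Rpower (INR N.+2) (- eps)).
  by apply: Rmult_le_compat_l; lra.
rewrite -Rmult_assoc Rinv_l ?Rmult_1_l; last lra.
lra.
Qed.

Lemma big_exp (I : Type) (r : seq I) (P : pred I) (f : I -> R) :
  \big[Rmult/1]_(i <- r | P i) exp (f i) = exp (\big[Rplus/0]_(i <- r | P i) f i).
Proof.
elim/big_rec2 : _ => [|i y1 y2 _ ->]; first by rewrite exp_0.
by rewrite exp_plus.
Qed.

Lemma prime_sum eps N : 0 < eps ->
  \big[Rplus/0]_(l < size (Pl N)) Rpower (INR (nth 0%N (Pl N) l)) (-(1+eps)) <= / eps.
Proof.
move=> e0.
rewrite -(big_mkord xpredT (fun l => Rpower (INR (nth 0%N (Pl N) l)) (-(1+eps)))).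
rewrite -(big_nth 0%N xpredT (fun p => Rpower (INR p) (-(1+eps)))) /Pl big_filter.
have T0 : forall p, 0 <= Rpower (INR p) (-(1+eps)) by move=> p; left; apply: exp_pos.
apply: Rle_trans (_ : _ <= \big[Rplus/0]_(n < N.+2 | (2 <= n)%N) Rpower (INR n) (-(1+eps))) _.
  have -> : \big[Rplus/0]_(i <- iota 0 N.+1 | prime i) Rpower (INR i) (-(1+eps))
       = \big[Rplus/0]_(i < N.+1 | prime i) Rpower (INR i) (-(1+eps)).
    by rewrite -(big_mkord prime (fun i => Rpower (INR i) (-(1+eps)))).
  rewrite [X in _ <= X]big_mkcond big_ord_recr.
  rewrite -[X in X <= _]Rplus_0_r; apply: Rplus_le_compat; last first.
    by case: ifP => _; [exact: T0 | exact: Rle_refl].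
  have : \big[Rplus/0]_(i < N.+1 | prime i) Rpower (INR i) (- (1 + eps))
      <= \big[Rplus/0]_(i < N.+1) (if (2 <= i)%N then Rpower (INR i) (- (1 + eps)) else 0).
    rewrite big_mkcond; apply: sumR_le => i _; case pi: (prime i).
      by rewrite prime_gt1 //; exact: Rle_refl.
    by case: (2 <= i)%N; [exact: T0 | exact: Rle_refl].
  by [].
apply: Rle_trans (zeta_tail eps N e0) _.
have : 0 < Rpower (INR N.+1) (- eps) by apply: exp_pos.
have : 0 < / eps by apply: Rinv_0_lt_compat.
nra.
Qed.

Lemma prod_bound eps N : 0 < eps ->
  \big[Rmult/1]_(l < size (Pl N)) (1 + 98 * Rpower (INR (nth 0%N (Pl N) l)) (-(1+eps)))
   <= exp (98 / eps).
Proof.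
move=> e0.
have H := @prodR_le 'I_(size (Pl N)) (index_enum _) xpredT
   (fun l => 1 + 98 * Rpower (INR (nth 0%N (Pl N) l)) (-(1+eps)))
   (fun l => exp (98 * Rpower (INR (nth 0%N (Pl N) l)) (-(1+eps)))).
apply: Rle_trans; first apply: (proj2 (H _)).
  move=> l _; split; last exact: exp_ineq1_le.
  have : 0 < Rpower (INR (nth 0%N (Pl N) l)) (- (1 + eps)) by apply: exp_pos.
  lra.
rewrite big_exp; apply: exp_le.
rewrite -big_distrr /=.
have := prime_sum eps N e0.
move=> h; rewrite /Rdiv; apply: Rmult_le_compat_l; [lra | exact: h].
Qed.

Lemma rankin_term eps N m n : 0 < eps -> (0 < m)%N -> (0 < n)%N -> (m * n <= N)%N ->
  summand m n <= Rpower (INR N) (1 + eps) * Fw eps m n.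
Proof.
move=> e0 m0 n0 mnN.
have mn0 : (0 < m * n)%N by rewrite muln_gt0 m0 n0.
have s0 : 0 <= summand m n.
  by rewrite summandE; apply: Rmult_le_pos; left; apply: exp_pos.
have L : ln (INR (m * n)%N) <= ln (INR N) by apply: ln_INR_le.
have E : Rpower (INR N) (1 + eps) * Rpower (INR (m * n)%N) (- (1 + eps)) >= 1.
  rewrite /Rpower -exp_plus; apply: Rle_ge; rewrite -{1}exp_0; apply: exp_le.
  have : 0 <= (1 + eps) * (ln (INR N) - ln (INR (m * n)%N)) by apply: Rmult_le_pos; lra.
  lra.
rewrite /Fw.
set P := Rpower (INR (m * n)%N) (- (1 + eps)) in E *.
set K := Rpower (INR N) (1 + eps) in E *.
replace (K * (summand m n * P)) with (summand m n * (K * P)) by ring.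
have := Rmult_le_compat_l _ _ _ s0 (Rge_le _ _ E); lra.
Qed.

Lemma sum_f_big (f : nat -> R) N : sum_f_R0 f N = \big[Rplus/0]_(i < N.+1) f i.
Proof.
elim: N => [|N IH]; first by rewrite big_ord_recr big_ord0 /= Rplus_0_l.
by rewrite /= IH [in RHS]big_ord_recr.
Qed.

Lemma main_bound eps N : 0 < eps -> S N <= exp (98 / eps) * Rpower (INR N) (1 + eps).
Proof.
move=> e0.
rewrite /S sum_f_big.
under eq_bigr do rewrite sum_f_big.
rewrite (pair_bigA _ (fun (m n : 'I_N.+1) =>
  if (1 <=? m)%coq_nat && (1 <=? n)%coq_nat && (m * n <=? N)%coq_nat then summand m n else 0)).
set K := Rpower (INR N) (1 + eps).
have K0 : 0 < K by apply: exp_pos.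
apply: Rle_trans (_ : _ <= \big[Rplus/0]_(x : 'I_N.+1 * 'I_N.+1)
    (if (0 < x.1)%N && (0 < x.2)%N then K * Fw eps x.1 x.2 else 0)) _.
  apply: sumR_le => -[m n] _; rewrite /fst /snd.
  case: (Nat.leb_spec0 1 m) => [m1|m1]; last first.
    rewrite !andFb.
    by case: ifP => _; [apply: Rmult_le_pos; [lra | exact: Fw_ge0] | exact: Rle_refl].
  rewrite andTb.
  case: (Nat.leb_spec0 1 n) => [n1|n1]; last first.
    rewrite andFb.
    by case: ifP => _; [apply: Rmult_le_pos; [lra | exact: Fw_ge0] | exact: Rle_refl].
  have m0 : (0 < m)%N by apply/ltP.
  have n0 : (0 < n)%N by apply/ltP.
  rewrite m0 n0 andTb.
  case: (Nat.leb_spec0 (m * n) N) => [mn|mn].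
    by apply: rankin_term => //; apply/leP; rewrite -multE.
  by apply: Rmult_le_pos; [lra | exact: Fw_ge0].
rewrite -big_mkcond -big_distrr /=.
rewrite [exp _ * _]Rmult_comm; apply: Rmult_le_compat_l; first lra.
apply: Rle_trans (expand eps N) _.
apply: Rle_trans (prod_bound eps N e0).
have H := @prodR_le 'I_(size (Pl N)) (index_enum _) xpredT
  (fun l => \big[Rplus/0]_(ij : 'I_N.+1 * 'I_N.+1)
       Fw eps (nth 0%N (Pl N) l ^ ij.1)%N (nth 0%N (Pl N) l ^ ij.2)%N)
  (fun l => 1 + 98 * Rpower (INR (nth 0%N (Pl N) l)) (-(1+eps))).
apply: (proj2 (H _)) => l _; split.
  by apply: sumR_ge0 => ij _; exact: Fw_ge0.
apply: local => //.
have : nth 0%N (Pl N) l \in Pl N by apply: mem_nth.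
by rewrite mem_filter => /andP[].
Qed.

Theorem mainTheorem7 :
  forall eps : R, 0 < eps ->
  exists C : R, 0 < C /\
    forall N : nat, (le 1 N) -> S N <= C * Rpower (INR N) (1 + eps).
Proof.
move=> eps e0; exists (exp (98 / eps)); split; first exact: exp_pos.
by move=> N _; exact: main_bound.
Qed.
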